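(* Let $D\subseteq\mathbb{R}$ and let $f,g:D\to\mathbb{R}$ be ordinal decreasing on $D$. Then $f+g$ is ordinal decreasing on $D$.
   Context: For $h:D\to\mathbb{R}$, a strictly decreasing sequence $x_1>x_2>\cdots$ in $D$ is $h$-bad if $h(x_1)>h(x_2)>\cdots$; $h$ is ordinal decreasing if there is no infinite $h$-bad sequence. *)

(* Defs.v *)
From Stdlib Require Import Reals.
Open Scope R_scope.

(* A subset D of R is a predicate; a function h : D -> R is modeled by a total
   function h : R -> R, of which only the values on D matter. *)

Definition bad_seq (D : R -> Prop) (h : R -> R) (x : nat -> R) : Prop :=
  (forall n, D (x n)) /\
  (forall n, x (S n) < x n) /\
  (forall n, h (x (S n)) < h (x n)).

Definition ordinal_decreasing (D : R -> Prop) (h : R -> R) : Prop :=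
  ~ exists x : nat -> R, bad_seq D h x.

(* Main.v *)
Require Import Defs.
From Stdlib Require Import Reals.
From Stdlib Require Import Lra Lia Classical ClassicalEpsilon.
Open Scope R_scope.

Lemma sub_build (P : nat -> Prop) (Rl : nat -> nat -> Prop) (i0 : nat) :
  P i0 -> (forall i, P i -> exists j, (i < j)%nat /\ P j /\ Rl i j) ->
  exists s : nat -> nat, forall k, (s k < s (S k))%nat /\ Rl (s k) (s (S k)).
Proof.
  intros H0 H.
  assert (H' : forall i, exists j, P i -> (i < j)%nat /\ P j /\ Rl i j).
  { intro i. destruct (classic (P i)) as [Hp|Hn].
    - destruct (H i Hp) as [j Hj]. exists j. auto.
    - exists O. intro; contradiction. }
  set (next := fun i => proj1_sig (constructive_indefinite_description _ (H' i))).
  assert (Hn : forall i, P i -> (i < next i)%nat /\ P (next i) /\ Rl i (next i)).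
  { intros i Hi. unfold next. destruct (constructive_indefinite_description _ (H' i)) as [j Hj].
    simpl. auto. }
  exists (fun k => Nat.iter k next i0).
  assert (HP : forall k, P (Nat.iter k next i0)).
  { induction k; simpl; auto. apply Hn; auto. }
  intro k. simpl. destruct (Hn _ (HP k)) as [A [_ C]]. auto.
Qed.

Lemma mono_idx (x : nat -> R) : (forall n, x (S n) < x n) ->
  forall i j, (i < j)%nat -> x j < x i.
Proof.
  intros H i j Hij. induction Hij.
  - apply H.
  - specialize (H m). lra.
Qed.

Lemma sub_bad D h x (s : nat -> nat) :
  (forall n, D (x n)) -> (forall n, x (S n) < x n) ->
  (forall k, (s k < s (S k))%nat /\ h (x (s (S k))) < h (x (s k))) ->
  bad_seq D h (fun k => x (s k)).
Proof.
  intros HD Hx Hs. split; [|split]; intro n.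
  - apply HD.
  - apply mono_idx; auto. apply Hs.
  - apply Hs.
Qed.

Theorem lemma4 (D : R -> Prop) (f g : R -> R) :
  ordinal_decreasing D f -> ordinal_decreasing D g ->
  ordinal_decreasing D (fun x => f x + g x).
Proof.
  intros Hf Hg [x [HD [Hx Hs]]].
  pose proof (mono_idx _ Hs) as Hsum. simpl in Hsum.
  set (S := fun i => forall j, (i < j)%nat -> f (x i) <= f (x j)).
  destruct (classic (forall N, exists i, (N <= i)%nat /\ S i)) as [Hinf|Hfin].
  - destruct (Hinf O) as [i0 [_ Hi0]].
    destruct (sub_build S (fun i j => g (x j) < g (x i)) i0 Hi0) as [s Hsb].
    + intros i Hi. destruct (Hinf (Datatypes.S i)) as [j [Hj HSj]].
      exists j. split; [lia|]. split; auto.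
      specialize (Hi j ltac:(lia)). specialize (Hsum i j ltac:(lia)). lra.
    + apply Hg. exists (fun k => x (s k)). apply sub_bad; auto.
  - apply not_all_ex_not in Hfin. destruct Hfin as [N HN].
    assert (Hb : forall i, (N <= i)%nat -> exists j, (i < j)%nat /\ f (x j) < f (x i)).
    { intros i Hi. apply NNPP. intro Hc. apply HN. exists i. split; auto.
      intros j Hj. apply Rnot_lt_le. intro. apply Hc. exists j. auto. }
    destruct (sub_build (fun i => (N <= i)%nat) (fun i j => f (x j) < f (x i)) N (le_n N)) as [s Hsb].
    + intros i Hi. destruct (Hb i Hi) as [j [Hj Hf']]. exists j. split; [auto|]. split; [lia|auto].
    + apply Hf. exists (fun k => x (s k)). apply sub_bad; auto.
Qed.
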